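(* In a finite dynamic game as described in the context, if $K^i$ is unilaterally sufficient information for player $i$, then for every behavioral strategy profile $g^{-i}$ of the players other than $i$, $K^i$ is an information state under $g^{-i}$ for the payoffs of all players $\mathcal{I}$: there exist functions $P_t^{i,g^{-i}}:\mathcal{K}_t^i\times\mathcal{U}_t^i\to\Delta(\mathcal{K}_{t+1}^i)$ and $r_t^{j,g^{-i}}:\mathcal{K}_t^i\times\mathcal{U}_t^i\to[-1,1]$ ($j\in\mathcal{I}$), not depending on $g^i$, such that $\Pr^{g^i,g^{-i}}(k_{t+1}^i\mid h_t^i,u_t^i)=P_t^{i,g^{-i}}(k_{t+1}^i\mid k_t^i,u_t^i)$ for all $t<T$ and $\mathbb{E}^{g^i,g^{-i}}[R_t^j\mid h_t^i,u_t^i]=r_t^{j,g^{-i}}(k_t^i,u_t^i)$ for all $j\in\mathcal{I}$ and all $t$, for all behavioral strategies $g^i$ and all $(h_t^i,u_t^i)$ admissible under $(g^i,g^{-i})$.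
   Context: Game model: finite set of players $\mathcal{I}$, times $\mathcal{T}=\{1,\dots,T\}$. At time $t$ each player $i$ takes action $U_t^i\in\mathcal{U}_t^i$, obtains reward $R_t^i\in[-1,1]$ and learns new information $Z_t^i\in\mathcal{Z}_t^i$. There is a state $X_t\in\mathcal{X}_t$ with $(X_{t+1},Z_t,R_t)=f_t(X_t,U_t,W_t)$ for fixed functions $f_t$. Primitive random variables $(X_1,H_1)$ and $W_1,\dots,W_T$ are mutually independent with commonly known distributions. All sets are finite. Perfect recall: $H_t^i=(H_1^i,Z_{1:t-1}^i)\in\mathcal{H}_t^i$, and $U_t^i$ is a component of $Z_t^i$. Behavioral strategy $g_t^i:\mathcal{H}_t^i\to\Delta(\mathcal{U}_t^i)$. A realization is admissible under a (partial) profile if it has positive probability under some completion of it. Compression: $K_1^i=\iota_1^i(H_1^i)$, $K_t^i=\iota_t^i(K_{t-1}^i,Z_{t-1}^i)$ for fixed maps, finite value sets $\mathcal{K}_t^i$; $k_t^i$ is the compression of $h_t^i$. Unilaterally sufficient information (USI): $K^i$ is USI for player $i$ if there exist $F_t^{i,g^i}:\mathcal{K}_t^i\to\Delta(\mathcal{H}_t^i)$ depending only on $g^i$ and $\Phi_t^{i,g^{-i}}:\mathcal{K}_t^i\to\Delta(\mathcal{X}_t\times\mathcal{H}_t^{-i})$ depending only on $g^{-i}$ with $\Pr^g(x_t,h_t\mid k_t^i)=F_t^{i,g^i}(h_t^i\mid k_t^i)\Phi_t^{i,g^{-i}}(x_t,h_t^{-i}\mid k_t^i)$ for all behavioral profiles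 $g$, all $t$, all $k_t^i$ admissible under $g$ (with $x_t,h_t^i,h_t^{-i}$ ranging independently; the left side is $0$ if they disagree on shared components). *)

(* Defs.v *)
(* Finite dynamic games with behavioral strategies,
   probabilities valued in an arbitrary real field R. Times are 0-indexed:
   paper time t in {1..T} corresponds to index t-1 in {0..T-1}. *)
From mathcomp Require Import all_boot all_order all_algebra.
Set Implicit Arguments. Unset Strict Implicit. Unset Printing Implicit Defensive.
Import Order.TTheory GRing.Theory Num.Theory.
Local Open Scope ring_scope.

Definition is_distr (R : realFieldType) (A : finType) (p : A -> R) : Prop :=
  (forall a, 0 <= p a) /\ \sum_(a : A) p a = 1.

Fixpoint Hist (H1 : finType) (Z : nat -> finType) (t : nat) : finType :=
  match t with 0 => H1 | t'.+1 => (Hist H1 Z t' * Z t')%type end.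

Record game (R : realFieldType) := Game {
  Pl : finType;
  T : nat;
  X : nat -> finType;
  U : Pl -> nat -> finType;
  Z : Pl -> nat -> finType;
  W : nat -> finType;
  H1 : Pl -> finType;
  (* (X_{t+1}, Z_t, R_t) = f_t(X_t, U_t, W_t) *)
  f : forall t, X t -> {dffun forall i, U i t} -> W t ->
        X t.+1 * {dffun forall i, Z i t} * (Pl -> R);
  (* U_t^i is a component of Z_t^i *)
  actZ : forall (i : Pl) (t : nat), Z i t -> U i t;
  actZ_f : forall t (x : X t) (u : {dffun forall i, U i t}) (w : W t) (i : Pl), actZ ((f x u w).1.2 i) = u i;
  rew_bound : forall t (x : X t) (u : {dffun forall i, U i t}) (w : W t) (i : Pl), (t < T)%N ->
     -1 <= (f x u w).2 i <= 1;
  (* distributions of the mutually independent primitive r.v.s *)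
  P0 : X 0 -> {dffun forall i, H1 i} -> R;
  P0_distr : (forall x h, 0 <= P0 x h) /\ \sum_x \sum_h P0 x h = 1;
  PW : forall t, W t -> R;
  PW_distr : forall t, (t < T)%N -> is_distr (@PW t)
}.

Section Game.
Variables (R : realFieldType) (G : game R).

Definition HistP (i : Pl G) (t : nat) : finType := Hist (H1 i) (Z i) t.

Definition strat (i : Pl G) := forall t, HistP i t -> U i t -> R.
Definition valid_strat (i : Pl G) (gi : strat i) : Prop :=
  forall t (h : HistP i t), (t < T G)%N -> is_distr (gi t h).
Definition profile := forall i : Pl G, strat i.

Definition JHist (t : nat) := {dffun forall j : Pl G, HistP j t}.

Definition ext_hist t (h : JHist t) (z : {dffun forall i, Z i t}) : JHist t.+1 :=
  [ffun j => ((h j, z j) : HistP j t.+1)].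

Fixpoint mu (g : profile) (t : nat) : X G t -> JHist t -> R :=
  match t return X G t -> JHist t -> R with
  | 0 => fun x h => P0 x h
  | t'.+1 => fun x' h' =>
      \sum_(x : X G t') \sum_(h : JHist t') \sum_(u : {dffun forall j, U j t'})
       \sum_(w : W G t')
        mu g x h * (\prod_(j : Pl G) g j t' (h j) (u j)) * PW w *
        ((((f x u w).1.1 == x') && (ext_hist h (f x u w).1.2 == h'))%:R)
  end.

Definition Et (g : profile) (t : nat)
  (phi : X G t -> JHist t -> {dffun forall j, U j t} -> W G t -> R) : R :=
  \sum_(x : X G t) \sum_(h : JHist t) \sum_(u : {dffun forall j, U j t})
   \sum_(w : W G t)
    mu g x h * (\prod_(j : Pl G) g j t (h j) (u j)) * PW w * phi x h u w.

Definition pr_hu g i t (hi : HistP i t) (ui : U i t) : R :=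
  @Et g t (fun x h u w => ((h i == hi) && (u i == ui))%:R).

Definition admissible_hu g i t (hi : HistP i t) (ui : U i t) : Prop :=
  0 < pr_hu g hi ui.

Definition upd (g : profile) (i : Pl G) (gi : strat i) : profile := dfwith g gi.

End Game.

Record compression (R : realFieldType) (G : game R) (i : Pl G) := Compression {
  K : nat -> finType;
  iota1 : H1 i -> K 0;
  iota : forall t, K t -> Z i t -> K t.+1
}.

Section Compr.
Variables (R : realFieldType) (G : game R) (i : Pl G) (C : compression i).

Fixpoint compr (t : nat) : HistP i t -> K C t :=
  match t return HistP i t -> K C t with
  | 0 => fun h => @iota1 R G i C h
  | t'.+1 => fun h => @iota R G i C t' (compr h.1) h.2
  end.

Definition pr_k (g : profile G) t (k : K C t) : R :=
  \sum_(x : X G t) \sum_(h : JHist G t) mu g x h * (compr (h i) == k)%:R.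

Definition cond_xh (g : profile G) t (k : K C t) (x : X G t) (h : JHist G t) : R :=
  mu g x h * (compr (h i) == k)%:R / pr_k g k.

Definition OHist t := {dffun forall j : {j : Pl G | j != i}, HistP (val j) t}.
Definition restr t (h : JHist G t) : OHist t := [ffun j => h (val j)].

Definition USI : Prop :=
  exists (F : strat i -> forall t, K C t -> HistP i t -> R)
         (Phi : profile G -> forall t, K C t -> (X G t * OHist t)%type -> R),
    (* Phi depends only on g^{-i} (F depends only on g^i by its type) *)
    (forall g g' : profile G, (forall j, j != i -> g j = g' j) -> Phi g = Phi g') /\
    (forall (gi : strat i) t k, valid_strat gi -> (t < T G)%N -> is_distr (F gi t k)) /\
    (forall (g : profile G) t k, (forall j, j != i -> valid_strat (g j)) ->
        (t < T G)%N -> is_distr (Phi g t k)) /\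
    (forall g : profile G, (forall j, valid_strat (g j)) ->
      forall t (k : K C t), (t < T G)%N -> 0 < pr_k g k ->
      forall (x : X G t) (h : JHist G t),
        cond_xh g k x h = F (g i) t k (h i) * Phi g t k (x, restr h)).

Definition cond_next (g : profile G) t (hi : HistP i t) (ui : U i t) (k' : K C t.+1) : R :=
  @Et R G g t (fun x h u w => [&& h i == hi, u i == ui &
            compr ((ext_hist h (f x u w).1.2) i) == k']%:R) / pr_hu g hi ui.

Definition cond_rew (g : profile G) (j : Pl G) t (hi : HistP i t) (ui : U i t) : R :=
  @Et R G g t (fun x h u w => ((h i == hi) && (u i == ui))%:R * (f x u w).2 j)
    / pr_hu g hi ui.
End Compr.

(* Main.v *)
Require Import Defs.
From mathcomp Require Import all_boot all_order all_algebra.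
From mathcomp Require Import ring.
Set Implicit Arguments. Unset Strict Implicit. Unset Printing Implicit Defensive.
Import Order.TTheory GRing.Theory Num.Theory.
Local Open Scope ring_scope.

Lemma prod_sub (R : comNzRingType) (I : finType) (i : I) (Fj : I -> R) :
  \prod_(j | j != i) Fj j = \prod_(j' : {j : I | j != i}) Fj (val j').
Proof.
rewrite (reindex_omap (val : {j : I | j != i} -> I) insub); last by move=> j Hj; rewrite insubT.
by apply: eq_bigl => j'; rewrite (valP j') valK eqxx.
Qed.

Lemma mu_ge0 (R : realFieldType) (G : game R) (g : profile G) :
  (forall j, valid_strat (g j)) -> forall t, (t <= T G)%N ->
  forall (x : X G t) (h : JHist G t), 0 <= mu g x h.
Proof.
move=> Hg; elim=> [|t IH] Ht x h /=.
  by case: (P0_distr G) => ->.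
have Ht' : (t < T G)%N by [].
apply: sumr_ge0 => x0 _; apply: sumr_ge0 => h0 _; apply: sumr_ge0 => u _; apply: sumr_ge0 => w _.
repeat apply: mulr_ge0 => //.
- exact: IH (ltnW Ht') _ _.
- by apply: prodr_ge0 => j _; case: (Hg j t (h0 j) Ht').
- by case: (PW_distr Ht') .
Qed.
Section SumProd.
Variables (R : comNzRingType) (I : finType) (T_ : I -> finType).
Lemma sum_prod_dffun (c : forall j, T_ j -> R) :
  \sum_(u : {dffun forall j, T_ j}) \prod_j c j (u j) = \prod_j \sum_(v : T_ j) c j v.
Proof.
rewrite (reindex (@dffun_of_fprod I T_)); last first.
  by apply: onW_bij; apply: dffun_of_fprod_bij.
pose P_ := fun j => [ffun v : T_ j => c j v].
transitivity (\sum_(t : fprod T_) \prod_(j in I) P_ j (t j)).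
  by apply: eq_bigr => t _; apply: eq_bigr => j _; rewrite !ffunE.
rewrite big_fprod.
rewrite -(bigA_distr_big_dep (tagged_with T_) (fun i j => untag 0 (P_ i) j)).
apply: eq_bigr => j _.
transitivity (\sum_(v : T_ j) P_ j v); last by apply: eq_bigr => v _; rewrite ffunE.
rewrite (big_tag (fun j => P_ j) j).
by apply: eq_bigl.
Qed.
End SumProd.
Section Split.
Variables (I : finType) (i : I) (T_ : I -> finType).
Definition NI := {j : I | j != i}.

Definition pick_aux (a : T_ i) (b : {dffun forall j' : NI, T_ (val j')}) (j : I)
  (bb : bool) : (j != i) = bb -> T_ j :=
  match bb as bb' return (j != i) = bb' -> T_ j with
  | true => fun p => b (exist _ j p)
  | false => fun p => eq_rect i T_ a j (esym (eqP (negbFE p)))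
  end.

Definition jn a b : {dffun forall j, T_ j} :=
  [ffun j => @pick_aux a b j (j != i) erefl].

Definition prj (u : {dffun forall j, T_ j}) : {dffun forall j' : NI, T_ (val j')} :=
  [ffun j' => u (val j')].

Lemma jn_i a b : jn a b i = a.
Proof.
rewrite ffunE; move: (erefl (i != i)); rewrite {2 3}eqxx => e /=.
by rewrite (eq_axiomK (esym (eqP (negbFE e)))).
Qed.

Lemma jn_val a b (j' : NI) : jn a b (val j') = b j'.
Proof.
case: j' => j p; rewrite ffunE /=; move: (erefl (j != i)).
rewrite {2 3}p => e /=.
by rewrite (bool_irrelevance e p).
Qed.

Lemma prj_jn a b : prj (jn a b) = b.
Proof. by apply/ffunP => j'; rewrite ffunE jn_val. Qed.

Lemma jn_prj (u : {dffun forall j, T_ j}) : jn (u i) (prj u) = u.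
Proof.
apply/ffunP => j; rewrite ffunE; move: (erefl (j != i)).
case: {2 3}(j != i) => e /=; first by rewrite ffunE.
move: (esym _) => pf; clear e; by case: j / pf.
Qed.

Lemma sum_split (R : nmodType) (F : {dffun forall j, T_ j} -> R) a :
  \sum_(u : {dffun forall j, T_ j} | u i == a) F u = \sum_b F (jn a b).
Proof.
rewrite (reindex_onto (jn a) prj); last by move=> u /eqP <-; rewrite jn_prj.
by apply: eq_bigl => b; rewrite jn_i prj_jn !eqxx.
Qed.
End Split.

Lemma Et_ext (R : realFieldType) (G : game R) (g : profile G) t phi1 phi2 :
  (forall x h u w, phi1 x h u w = phi2 x h u w) -> @Et R G g t phi1 = @Et R G g t phi2.
Proof.
move=> E; apply: eq_bigr => x _; apply: eq_bigr => h _; apply: eq_bigr => u _.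
by apply: eq_bigr => w _; rewrite E.
Qed.

Lemma sum_ind1 (R : nzRingType) (A : finType) (a : A) : \sum_(b : A) (a == b)%:R = 1 :> R.
Proof.
rewrite (bigD1 a) //= eqxx big1 ?addr0 // => b /negbTE.
by rewrite eq_sym => ->.
Qed.

Unset Implicit Arguments.
Section Main.
Variables (R : realFieldType) (G : game R) (i : Pl G) (C : compression i).
Variable (F : strat i -> forall t, K C t -> HistP i t -> R).
Variable (Phi : profile G -> forall t, K C t -> (X G t * OHist i t)%type -> R).
Hypothesis HPd : forall g g' : profile G, (forall j, j != i -> g j = g' j) -> Phi g = Phi g'.
Hypothesis HPhi : forall (g : profile G) t k, (forall j, j != i -> valid_strat (g j)) ->
        (t < T G)%N -> is_distr (Phi g t k).
Hypothesis Hfact : forall g : profile G, (forall j, valid_strat (g j)) ->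
      forall t (k : K C t), (t < T G)%N -> 0 < pr_k g k ->
      forall (x : X G t) (h : JHist G t),
        cond_xh g k x h = F (g i) t k (h i) * Phi g t k (x, restr i h).
Variable g : profile G.
Hypothesis Hg : forall j, j != i -> valid_strat (g j).

Definition wt t (ho : OHist i t) (u : {dffun forall j, U j t}) : R :=
  \prod_(j' : {j : Pl G | j != i}) g (val j') t (ho j') (u (val j')).

Definition Q t (k : K C t) (ui : U i t)
  (psi : X G t -> OHist i t -> {dffun forall j, U j t} -> W G t -> R) : R :=
  \sum_(x : X G t) \sum_(ho : OHist i t) \sum_(u : {dffun forall j, U j t}) \sum_(w : W G t)
    Phi g t k (x, ho) * ((u i == ui)%:R * wt t ho u) * PW w * psi x ho u w.

Lemma wt_ge0 t ho u : (t < T G)%N -> 0 <= wt t ho u.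
Proof.
move=> Ht; apply: prodr_ge0 => j' _.
by case: (Hg _ (valP j') t (ho j') Ht) => ->.
Qed.

Lemma wt_sum t (ho : OHist i t) ui : (t < T G)%N ->
  \sum_(u : {dffun forall j, U j t}) (u i == ui)%:R * wt t ho u = 1.
Proof.
move=> Ht.
transitivity (\sum_(u : {dffun forall j, U j t} | u i == ui) wt t ho u).
  by rewrite [RHS]big_mkcond /=; apply: eq_bigr => u _; case: eqP => _; rewrite ?mul1r ?mul0r.
rewrite (sum_split (T_ := fun j => U j t)).
transitivity (\sum_(b : {dffun forall j' : {j : Pl G | j != i}, U (val j') t})
   \prod_(j' : {j : Pl G | j != i}) g (val j') t (ho j') (b j')).
  apply: eq_bigr => b _; apply: eq_bigr => j' _.
  by rewrite (jn_val (T_ := fun j => U j t)).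
rewrite (sum_prod_dffun (fun j' v => g (val j') t (ho j') v)).
apply: big1 => j' _.
by case: (Hg _ (valP j') t (ho j') Ht).
Qed.

Lemma Q1 t k ui : (t < T G)%N -> Q t k ui (fun _ _ _ _ => 1) = 1.
Proof.
move=> Ht; rewrite /Q.
have [_ HPW] := PW_distr Ht.
have [_ HP] := HPhi g t k Hg Ht.
transitivity (\sum_(x : X G t) \sum_(ho : OHist i t) Phi g t k (x, ho)).
  apply: eq_bigr => x _; apply: eq_bigr => ho _.
  transitivity (\sum_(u : {dffun forall j, U j t})
     Phi g t k (x, ho) * ((u i == ui)%:R * wt t ho u) * \sum_(w : W G t) PW w).
    by apply: eq_bigr => u _; rewrite mulr_sumr; apply: eq_bigr => w _; rewrite mulr1.
  by rewrite HPW; under eq_bigr do rewrite mulr1; rewrite -mulr_sumr wt_sum // mulr1.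
by rewrite pair_bigA; rewrite -HP; apply: eq_bigr => -[].
Qed.

Lemma Q_ge0 t k ui psi : (t < T G)%N -> (forall x ho u w, 0 <= psi x ho u w) ->
  0 <= Q t k ui psi.
Proof.
move=> Ht Hpsi.
have [HPW0 _] := PW_distr Ht.
have [HP0 _] := HPhi g t k Hg Ht.
apply: sumr_ge0 => x _; apply: sumr_ge0 => ho _; apply: sumr_ge0 => u _; apply: sumr_ge0 => w _.
by rewrite !mulr_ge0 ?wt_ge0.
Qed.

Lemma Q_le t k ui psi1 psi2 : (t < T G)%N ->
  (forall x ho u w, psi1 x ho u w <= psi2 x ho u w) ->
  Q t k ui psi1 <= Q t k ui psi2.
Proof.
move=> Ht Hpsi.
have [HPW0 _] := PW_distr Ht.
have [HP0 _] := HPhi g t k Hg Ht.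
apply: ler_sum => x _; apply: ler_sum => ho _; apply: ler_sum => u _; apply: ler_sum => w _.
by apply: ler_wpM2l => //; rewrite !mulr_ge0 ?wt_ge0.
Qed.

Lemma QN t k ui psi : Q t k ui (fun x ho u w => - psi x ho u w) = - Q t k ui psi.
Proof.
rewrite /Q -sumrN; apply: eq_bigr => x _; rewrite -sumrN; apply: eq_bigr => ho _.
rewrite -sumrN; apply: eq_bigr => u _; rewrite -sumrN; apply: eq_bigr => w _.
by rewrite mulrN.
Qed.

Lemma Q_sum t k ui (A : finType) (psi : A -> X G t -> OHist i t -> {dffun forall j, U j t} -> W G t -> R) :
  \sum_(a : A) Q t k ui (psi a) = Q t k ui (fun x ho u w => \sum_(a : A) psi a x ho u w).
Proof.
rewrite /Q exchange_big; apply: eq_bigr => x _; rewrite exchange_big; apply: eq_bigr => ho _.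
rewrite exchange_big; apply: eq_bigr => u _; rewrite exchange_big; apply: eq_bigr => w _.
by rewrite mulr_sumr.
Qed.

Lemma upd_valid (gi : strat i) : valid_strat gi -> forall j, valid_strat ((upd g gi : profile G) j).
Proof.
move=> Hgi j; rewrite /upd; case: (eqVneq i j) => [<-|ne]; first by rewrite dfwith_in.
by rewrite dfwith_out //; apply: Hg; rewrite eq_sym.
Qed.

Lemma Phi_upd (gi : strat i) : Phi (upd g gi) = Phi g.
Proof. by apply: HPd => j ne; rewrite /upd dfwith_out // eq_sym. Qed.

Lemma pr_k_pos (gi : strat i) (Hgi : valid_strat gi) t (Ht : (t < T G)%N) (hi : HistP i t) (ui : U i t) :
  admissible_hu (upd g gi) hi ui -> 0 < pr_k (C:=C) (upd g gi) (compr C hi).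
Proof.
move=> Had.
have mu0 := mu_ge0 (upd_valid gi Hgi) (ltnW Ht).
have ge0 : forall x, 0 <= \sum_(h : JHist G t) mu (upd g gi) x h * (compr C (h i) == compr C hi)%:R.
  by move=> x; apply: sumr_ge0 => h _; apply: mulr_ge0.
rewrite lt_def andbC; apply/andP; split; first by apply: sumr_ge0 => x _.
apply/negP => /eqP E0.
have Z : forall x (h : JHist G t), h i = hi -> mu (upd g gi) x h = 0.
  move=> x h hh.
  rewrite /pr_k in E0.
  have Ex := @psumr_eq0P R (X G t) xpredT _ (fun x _ => ge0 x) E0 x isT.
  have := @psumr_eq0P R (JHist G t) xpredT _ (fun h _ => mulr_ge0 (mu0 x h) (ler0n _ _)) Ex h isT.
  by rewrite hh eqxx mulr1.
move: Had; rewrite /admissible_hu /pr_hu /Et.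
rewrite big1 ?ltxx // => x _; apply: big1 => h _; apply: big1 => u _; apply: big1 => w _.
case: (eqVneq (h i) hi) => [hh|hh]; first by rewrite Z // !mul0r.
by rewrite /= mulr0.
Qed.

Lemma key (gi : strat i) (Hgi : valid_strat gi) t (Ht : (t < T G)%N) (hi : HistP i t) (ui : U i t)
  (Hpk : 0 < pr_k (C:=C) (upd g gi) (compr C hi)) psi :
  @Et R G (upd g gi) t (fun x h u w => ((h i == hi) && (u i == ui))%:R * psi x (restr i h) u w)
  = pr_k (C:=C) (upd g gi) (compr C hi) * F gi t (compr C hi) hi * gi t hi ui
      * Q t (compr C hi) ui psi.
Proof.
set k := compr C hi.
rewrite /Et /Q !mulr_sumr; apply: eq_bigr => x _.
rewrite (bigID (fun h : JHist G t => h i == hi)) /=.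
rewrite [X in _ + X]big1 ?addr0; last first.
  move=> h /negbTE E; apply: big1 => u _; apply: big1 => w _.
  by rewrite E /= mul0r mulr0.
rewrite (sum_split (T_ := fun j => HistP j t)).
rewrite [RHS]mulr_sumr; apply: eq_bigr => ho _.
set h := jn hi ho.
have hi_eq : h i = hi by rewrite /h jn_i.
have restr_eq : restr i h = ho.
  by apply/ffunP => j'; rewrite ffunE /h (jn_val (T_ := fun j => HistP j t)).
have Hmu : mu (upd g gi) x h = F gi t k hi * Phi g t k (x, ho) * pr_k (C:=C) (upd g gi) k.
  have := Hfact (upd g gi) (upd_valid gi Hgi) t k Ht Hpk x h.
  rewrite /cond_xh hi_eq eqxx mulr1 restr_eq Phi_upd /upd dfwith_in => E.
  by rewrite -E divfK // lt0r_neq0.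
have Hprod : forall u : {dffun forall j, U j t},
    \prod_j (upd g gi : profile G) j t (h j) (u j) = gi t hi (u i) * wt t ho u.
  move=> u; rewrite (bigD1 i) //= prod_sub; congr (_ * _).
    by rewrite /upd dfwith_in hi_eq.
  apply: eq_bigr => j' _; rewrite /upd dfwith_out; last by rewrite eq_sym (valP j').
  by rewrite /h (jn_val (T_ := fun j => HistP j t)).
rewrite mulr_sumr; apply: eq_bigr => u _; rewrite mulr_sumr; apply: eq_bigr => w _.
rewrite Hmu Hprod hi_eq restr_eq eqxx /=.
case: eqP => [->|_]; last by rewrite !mul0r !mulr0 !mul0r mulr0.
rewrite !mul1r; ring.
Qed.

Lemma Q_ext t k ui psi1 psi2 : (forall x ho u w, psi1 x ho u w = psi2 x ho u w) ->
  Q t k ui psi1 = Q t k ui psi2.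
Proof.
move=> E; apply: eq_bigr => x _; apply: eq_bigr => ho _; apply: eq_bigr => u _.
by apply: eq_bigr => w _; rewrite E.
Qed.

Lemma main_aux :
  exists (P : forall t, K C t -> U i t -> K C t.+1 -> R)
         (r : Pl G -> forall t, K C t -> U i t -> R),
    (forall t k u, (t.+1 < T G)%N -> is_distr (P t k u)) /\
    (forall j t k u, (t < T G)%N -> -1 <= r j t k u <= 1) /\
    forall gi : strat i, valid_strat gi ->
      (forall t (hi : HistP i t) (ui : U i t) (k' : K C t.+1),
         (t.+1 < T G)%N -> admissible_hu (upd g gi) hi ui ->
         cond_next (C:=C) (upd g gi) hi ui k' = P t (compr C hi) ui k') /\
      (forall (j : Pl G) t (hi : HistP i t) (ui : U i t),
         (t < T G)%N -> admissible_hu (upd g gi) hi ui ->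
         cond_rew (upd g gi) j hi ui = r j t (compr C hi) ui).
Proof.
exists (fun t k ui k' => Q t k ui (fun x ho u w => (Defs.iota k ((f x u w).1.2 i) == k')%:R)).
exists (fun j t k ui => Q t k ui (fun x ho u w => (f x u w).2 j)).
split.
  move=> t k u Ht; have Ht' : (t < T G)%N := ltnW Ht.
  split; first by move=> k'; apply: Q_ge0 => // *; apply: ler0n.
  rewrite Q_sum; transitivity (Q t k u (fun _ _ _ _ => 1)); last exact: Q1.
  apply: Q_ext => x ho uu w.
  exact: sum_ind1.
split.
  move=> j t k u Ht; apply/andP; split.
    have E : Q t k u (fun _ _ _ _ => -1) = - Q t k u (fun _ _ _ _ => 1) :=
      QN t k u (fun _ _ _ _ => 1).
    rewrite Q1 // in E; rewrite -E; apply: Q_le => // x ho uu w.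
    by have /andP[] := @rew_bound R G t x uu w j Ht.
  rewrite -(Q1 t k u Ht); apply: Q_le => // x ho uu w.
  by have /andP[] := @rew_bound R G t x uu w j Ht.
move=> gi Hgi.
have Epr : forall t (Ht : (t < T G)%N) hi ui (Hpk : 0 < pr_k (C:=C) (upd g gi) (compr C hi)),
    pr_hu (upd g gi) hi ui
    = pr_k (C:=C) (upd g gi) (compr C hi) * F gi t (compr C hi) hi * gi t hi ui.
  move=> t Ht hi ui Hpk; rewrite /pr_hu.
  rewrite (@Et_ext R G (upd g gi) t _ (fun x h u w => ((h i == hi) && (u i == ui))%:R *
     (fun _ _ _ _ => 1) x (restr i h) u w)); last by move=> *; rewrite mulr1.
  by rewrite (key gi Hgi t Ht hi ui Hpk (fun _ _ _ _ => 1)) Q1 // mulr1.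
split.
  move=> t hi ui k' Ht Had; have Ht' : (t < T G)%N := ltnW Ht.
  have Hpk := pr_k_pos gi Hgi t Ht' hi ui Had.
  rewrite /cond_next.
  rewrite (@Et_ext R G (upd g gi) t _ (fun x h u w => ((h i == hi) && (u i == ui))%:R *
     (fun x ho u w => (Defs.iota (compr C hi) ((f x u w).1.2 i) == k')%:R) x (restr i h) u w)).
    move: Had; rewrite /admissible_hu (Epr t Ht' hi ui Hpk) => Had.
    rewrite (key gi Hgi t Ht' hi ui Hpk (fun x ho u w => (Defs.iota (compr C hi) ((f x u w).1.2 i) == k')%:R)).
    by rewrite mulrAC divff ?mul1r // lt0r_neq0.
  move=> x h u w /=.
  case: (eqVneq (h i) hi) => [hh|hh] /=; last by rewrite mul0r.
  rewrite /ext_hist ffunE /= hh.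
  by case: (u i == ui); rewrite /= ?mul1r ?mul0r.
move=> j t hi ui Ht Had.
have Hpk := pr_k_pos gi Hgi t Ht hi ui Had.
rewrite /cond_rew.
rewrite (@Et_ext R G (upd g gi) t _ (fun x h u w => ((h i == hi) && (u i == ui))%:R *
     (fun x ho u w => (f x u w).2 j) x (restr i h) u w)); last by [].
move: Had; rewrite /admissible_hu (Epr t Ht hi ui Hpk) => Had.
rewrite (key gi Hgi t Ht hi ui Hpk (fun x ho u w => (f x u w).2 j)).
by rewrite mulrAC divff ?mul1r // lt0r_neq0.
Qed.
End Main.

Theorem lemma4 (R : realFieldType) (G : game R) (i : Pl G)
    (C : compression i) :
  USI C ->
  forall g : profile G, (forall j, j != i -> valid_strat (g j)) ->
  exists (P : forall t, K C t -> U i t -> K C t.+1 -> R)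
         (r : Pl G -> forall t, K C t -> U i t -> R),
    (forall t k u, (t.+1 < T G)%N -> is_distr (P t k u)) /\
    (forall j t k u, (t < T G)%N -> -1 <= r j t k u <= 1) /\
    forall gi : strat i, valid_strat gi ->
      (forall t (hi : HistP i t) (ui : U i t) (k' : K C t.+1),
         (t.+1 < T G)%N -> admissible_hu (upd g gi) hi ui ->
         cond_next (C:=C) (upd g gi) hi ui k' = P t (compr C hi) ui k') /\
      (forall (j : Pl G) t (hi : HistP i t) (ui : U i t),
         (t < T G)%N -> admissible_hu (upd g gi) hi ui ->
         cond_rew (upd g gi) j hi ui = r j t (compr C hi) ui).
Proof.
move=> [F [Phi [HPd [_ [HPhi Hfact]]]]] g Hg.
exact: (@main_aux R G i C F Phi HPd HPhi Hfact g Hg).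
Qed.
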